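(* The functor $\mathfrak{M}^{\mathrm{nc}}$ preserves homotopy: if $f_0,f_1:A\to A'$ and $g_0,g_1:B\to B'$ are morphisms in $\mathbf{A}_{\mathrm{nc}}$ with $f_0$ homotopic to $f_1$ and $g_0$ homotopic to $g_1$, then the pro-morphisms $\mathfrak{M}_{f_0,g_0},\mathfrak{M}_{f_1,g_1}:\mathfrak{M}^{\mathrm{nc}}_{A,B'}\to\mathfrak{M}^{\mathrm{nc}}_{A',B}$ are strongly homotopic.
   Context: Fix a field $\mathbb{F}$; $\mathbf{A}_{\mathrm{nc}}$ is the category of all associative (not necessarily unital or commutative) $\mathbb{F}$-algebras; $\otimes=\otimes_{\mathbb{F}}$; pro-algebras are inverse systems of algebras over directed sets with $\mathrm{Hom}((C_i),(D_j))=\varprojlim_j\varinjlim_i\mathrm{Hom}(C_i,D_j)$, tensor products componentwise. For algebras $A,B$, $\mathfrak{M}^{\mathrm{nc}}_{A,B}$ with $\Upsilon_{A,B}:A\to B\otimes\mathfrak{M}^{\mathrm{nc}}_{A,B}$ is the (existing, unique up to isomorphism) universal pair: every pro-morphism $\varphi:A\to B\otimes C$ into a pro-algebra factors as $(\mathrm{id}_B\otimes\overline{\varphi})\Upsilon_{A,B}$ for a unique $\overline{\varphi}:\mathfrak{M}^{\mathrm{nc}}_{A,B}\to C$. For $f:A\to A'$ and $g:B\to B'$ (so that $\mathfrak{M}$ is covariant in the first and contravariant in the second variable), $\mathfrak{M}_{f,g}:\mathfrak{M}^{\mathrm{nc}}_{A,B'}\to\mathfrak{M}^{\mathrm{nc}}_{A',B}$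 is the unique pro-morphism with $(g\otimes\mathrm{id})\Upsilon_{A',B}f=(\mathrm{id}_{B'}\otimes\mathfrak{M}_{f,g})\Upsilon_{A,B'}$. For an algebra or pro-algebra $B$, $B[x]=B\otimes\mathbb{F}[x]$ and $\mathrm{p}_0,\mathrm{p}_1:B[x]\to B$ are evaluations at $x=0,1$. Two (pro-)morphisms $f,g:A\to B$ are elementary homotopic if there is a (pro-)morphism $H:A\to B[x]$ with $\mathrm{p}_0H=f$, $\mathrm{p}_1H=g$. Morphisms of algebras are homotopic, and pro-morphisms are strongly homotopic, if they are connected by a finite chain of elementary homotopies (of morphisms, resp. pro-morphisms). *)

(* Defs.v *)
From mathcomp Require Import all_boot all_algebra.
From Stdlib Require Import ClassicalEpsilon Relations.
Set Implicit Arguments. Unset Strict Implicit. Unset Printing Implicit Defensive.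
Import GRing.Theory.
Local Open Scope ring_scope.

Section Defs.
Variable F : fieldType.

Record alg := Alg {
  car :> Type;
  a0 : car;
  aadd : car -> car -> car;
  aopp : car -> car;
  ascale : F -> car -> car;
  amul : car -> car -> car }.

Definition is_alg (A : alg) : Prop :=
  (forall x y z : A, aadd x (aadd y z) = aadd (aadd x y) z) /\
  (forall x y : A, aadd x y = aadd y x) /\
  (forall x : A, aadd (a0 A) x = x) /\
  (forall x : A, aadd (aopp x) x = a0 A) /\
  (forall (a : F) (x y : A), ascale a (aadd x y) = aadd (ascale a x) (ascale a y)) /\
  (forall (a b : F) (x : A), ascale (a + b) x = aadd (ascale a x) (ascale b x)) /\
  (forall (a b : F) (x : A), ascale a (ascale b x) = ascale (a * b) x) /\
  (forall x : A, ascale 1 x = x) /\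
  (forall x y z : A, amul x (aadd y z) = aadd (amul x y) (amul x z)) /\
  (forall x y z : A, amul (aadd x y) z = aadd (amul x z) (amul y z)) /\
  (forall (a : F) (x y : A), amul (ascale a x) y = ascale a (amul x y)) /\
  (forall (a : F) (x y : A), amul x (ascale a y) = ascale a (amul x y)) /\
  (forall x y z : A, amul x (amul y z) = amul (amul x y) z).

Definition is_hom (A B : alg) (f : A -> B) : Prop :=
  [/\ (forall x y, f (aadd x y) = aadd (f x) (f y)),
      (forall a x, f (ascale a x) = ascale a (f x)) &
      (forall x y, f (amul x y) = amul (f x) (f y))].

(* elements of B (x) C are represented by formal sums  sum_k b_k (x) c_k
   (lists of pairs); two formal sums define the same tensor iff every
   bilinear form B x C -> F takes the same value on them (this is the
   kernel of the canonical map onto B (x)_F C, F being a field). *)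
Definition bilin (B C : alg) (phi : B -> C -> F) : Prop :=
  [/\ (forall b b' c, phi (aadd b b') c = phi b c + phi b' c),
      (forall a b c, phi (ascale a b) c = a * phi b c),
      (forall b c c', phi b (aadd c c') = phi b c + phi b c') &
      (forall a b c, phi b (ascale a c) = a * phi b c)].

Definition tens_rel (B C : alg) (s t : seq (B * C)%type) : Prop :=
  forall phi : B -> C -> F, bilin phi ->
    \sum_(p <- s) phi p.1 p.2 = \sum_(p <- t) phi p.1 p.2.

Definition tcar (B C : alg) : Type :=
  {P : seq (B * C)%type -> Prop | exists s, P = tens_rel s}.

Definition tclass (B C : alg) (s : seq (B * C)%type) : tcar B C :=
  exist _ (tens_rel s) (ex_intro _ s erefl).

Definition trepr (B C : alg) (x : tcar B C) : seq (B * C)%type :=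
  proj1_sig (constructive_indefinite_description _ (proj2_sig x)).

Definition tens (B C : alg) : alg :=
  @Alg (tcar B C) (tclass [::])
    (fun x y => tclass (trepr x ++ trepr y))
    (fun x => tclass [seq (aopp p.1, p.2) | p <- trepr x])
    (fun a x => tclass [seq (ascale a p.1, p.2) | p <- trepr x])
    (fun x y => tclass [seq (amul p.1 q.1, amul p.2 q.2) | p <- trepr x, q <- trepr y]).

Definition tmap (B B' C C' : alg) (f : B -> B') (g : C -> C')
  (x : tens B C) : tens B' C' :=
  tclass [seq (f p.1, g p.2) | p <- trepr x].

Definition polyA : alg :=
  @Alg {poly F} 0 +%R (fun p => - p) (fun a p => a *: p) *%R.

Definition ev (B : alg) (a : F) (x : tens B polyA) : B :=
  foldr (fun p acc => aadd (ascale (p.2 : {poly F}).[a] p.1) acc) (a0 B) (trepr x).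

Definition elem_htpy (A B : alg) (f g : A -> B) : Prop :=
  is_hom f /\ is_hom g /\
  exists H : A -> tens B polyA, is_hom H /\
    (forall x, ev 0 (H x) = f x) /\ (forall x, ev 1 (H x) = g x).

Definition homotopic (A B : alg) : relation (A -> B) :=
  @clos_refl_trans _ (@elem_htpy A B).

Record proalg := ProAlg {
  pidx : Type;
  ple : pidx -> pidx -> Prop;
  pobj : pidx -> alg;
  ptr : forall i j, ple i j -> pobj j -> pobj i }.

Arguments ple : clear implicits.
Arguments pobj : clear implicits.
Arguments ptr p {i j} _ _.

Definition is_proalg (C : proalg) : Prop :=
  (forall i, ple C i i) /\
  (forall i j k, ple C i j -> ple C j k -> ple C i k) /\
  inhabited (pidx C) /\
  (forall i j, exists k, ple C i k /\ ple C j k) /\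
  (forall i, is_alg (pobj C i)) /\
  (forall i j (h : ple C i j), is_hom (ptr _ h)) /\
  (forall i (h : ple C i i) x, ptr _ h x = x) /\
  (forall i j k (hij : ple C i j) (hjk : ple C j k) (hik : ple C i k) x,
     ptr _ hij (ptr _ hjk x) = ptr _ hik x).

(* a pro-morphism (C_i) -> (D_j), i.e. an element of lim_j colim_i Hom(C_i,D_j),
   given by chosen representatives f_j : C_{r j} -> D_j *)
Record promor (C D : proalg) := PM {
  pm_idx : pidx D -> pidx C;
  pm_map : forall j, pobj C (pm_idx j) -> pobj D j }.

Arguments pm_idx {C D} _ _.
Arguments pm_map {C D} _ _ _.

Definition germ_eq (C : proalg) (X : alg) (i : pidx C) (f : pobj C i -> X)
  (i' : pidx C) (f' : pobj C i' -> X) : Prop :=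
  exists k (hk : ple C i k) (hk' : ple C i' k),
    forall x, f (ptr _ hk x) = f' (ptr _ hk' x).

Definition is_promor (C D : proalg) (phi : promor C D) : Prop :=
  (forall j, is_hom (pm_map phi j)) /\
  (forall j j' (h : ple D j j'),
     germ_eq (fun x => ptr _ h (pm_map phi j' x)) (pm_map phi j)).

Definition pm_eq (C D : proalg) (phi psi : promor C D) : Prop :=
  forall j, germ_eq (pm_map phi j) (pm_map psi j).

Definition pm_comp (C D E : proalg) (psi : promor D E) (phi : promor C D) :
  promor C E :=
  @PM C E (fun k => pm_idx phi (pm_idx psi k))
    (fun k x => pm_map psi k (pm_map phi (pm_idx psi k) x)).

Definition constP (A : alg) : proalg :=
  @ProAlg unit (fun _ _ => True) (fun _ => A) (fun _ _ _ x => x).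

Definition const_mor (A A' : alg) (f : A -> A') : promor (constP A) (constP A') :=
  @PM (constP A) (constP A') (fun _ => tt) (fun _ x => f x).

Definition tensP (B : alg) (C : proalg) : proalg :=
  @ProAlg (pidx C) (@ple C) (fun i => tens B (pobj C i))
    (fun i j h => tmap id (ptr _ h)).

Definition idtens (B : alg) (C D : proalg) (phi : promor C D) :
  promor (tensP B C) (tensP B D) :=
  @PM (tensP B C) (tensP B D) (pm_idx phi) (fun j => tmap id (pm_map phi j)).

Definition gtens (B B' : alg) (g : B -> B') (C : proalg) :
  promor (tensP B C) (tensP B' C) :=
  @PM (tensP B C) (tensP B' C) id (fun j => tmap g id).

Definition polyP (D : proalg) : proalg :=
  @ProAlg (pidx D) (@ple D) (fun j => tens (pobj D j) polyA)
    (fun i j h => tmap (ptr _ h) id).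

Definition evP (D : proalg) (a : F) : promor (polyP D) D :=
  @PM (polyP D) D id (fun j => @ev (pobj D j) a).

Definition elem_htpyP (C D : proalg) (f g : promor C D) : Prop :=
  is_promor f /\ is_promor g /\
  exists H : promor C (polyP D), is_promor H /\
    pm_eq (pm_comp (evP D 0) H) f /\ pm_eq (pm_comp (evP D 1) H) g.

Definition strongly_homotopic (C D : proalg) : relation (promor C D) :=
  @clos_refl_trans _ (@elem_htpyP C D).

Definition is_universal (A B : alg) (M : proalg)
  (U : promor (constP A) (tensP B M)) : Prop :=
  is_proalg M /\ is_promor U /\
  forall (C : proalg), is_proalg C ->
  forall phi : promor (constP A) (tensP B C), is_promor phi ->
    exists psi : promor M C,
      [/\ is_promor psi,
          pm_eq (pm_comp (idtens B psi) U) phi &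
          forall psi' : promor M C, is_promor psi' ->
            pm_eq (pm_comp (idtens B psi') U) phi -> pm_eq psi' psi].

End Defs.

(* Main.v *)
Require Import Defs.
From mathcomp Require Import all_boot all_algebra.
From Stdlib Require Import Relations.
From HB Require Import structures.
From Stdlib Require Import ClassicalEpsilon ProofIrrelevance.
From mathcomp Require Import boolp classical_sets.
Set Implicit Arguments. Unset Strict Implicit. Unset Printing Implicit Defensive.
Import GRing.Theory.
Local Open Scope ring_scope.


Section TensCore.
Variable F : fieldType.

Definition bil (X Y : alg F) (G : (X * Y)%type -> F) := bilin (fun b c => G (b, c)).

Lemma trepr_spec (X Y : alg F) (x : tcar X Y) : proj1_sig x = tens_rel (trepr x).
Proof. exact: (proj2_sig (ClassicalEpsilon.constructive_indefinite_description _ (proj2_sig x))). Qed.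

Lemma tclass_trepr (X Y : alg F) (x : tcar X Y) : tclass (trepr x) = x.
Proof.
have e := trepr_spec x.
apply: (@eq_sig_hprop _ _ (fun P => proof_irrelevance _)).
change (tens_rel (trepr x) = proj1_sig x). exact: (esym e).
Qed.

Lemma tclass_eq (X Y : alg F) (s t : seq (X * Y)%type) : tens_rel s t -> tclass s = tclass t.
Proof.
move=> st; apply: (@eq_sig_hprop _ _ (fun P => proof_irrelevance _)).
change (tens_rel s = tens_rel t).
apply: functional_extensionality_dep => u; apply: propositional_extensionality.
by split => H phi bp; [rewrite -(st phi bp) (H phi bp) | rewrite (st phi bp) (H phi bp)].
Qed.

Lemma tens_rel_trepr (X Y : alg F) (s : seq (X * Y)%type) : tens_rel (trepr (tclass s)) s.
Proof.
have e := trepr_spec (tclass s); rewrite /= in e.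
have : tens_rel s (trepr (tclass s)) by rewrite e => phi _.
by move=> H phi bp; rewrite (H phi bp).
Qed.

Lemma sum_pair (X Y : alg F) (G : (X * Y)%type -> F) (s : seq (X * Y)%type) :
  \sum_(p <- s) (fun b c => G (b, c)) p.1 p.2 = \sum_(p <- s) G p.
Proof. by apply: eq_bigr => [[b c]]. Qed.

Lemma Tcl (X Y : alg F) (G : (X * Y)%type -> F) (s : seq (X * Y)%type) :
  bil G -> \sum_(p <- trepr (tclass s)) G p = \sum_(p <- s) G p.
Proof.
move=> bG; have H := @tens_rel_trepr _ _ s (fun b c => G (b, c)) bG.
transitivity (\sum_(p <- trepr (tclass s)) (fun b c => G (b, c)) p.1 p.2).
  by apply: eq_bigr => [[b c]].
by etransitivity; [exact: H|apply: eq_bigr => [[b c]]].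
Qed.

Lemma tens_ext (X Y : alg F) (x y : tens X Y) :
  (forall G, bil G -> \sum_(p <- trepr x) G p = \sum_(p <- trepr y) G p) -> x = y.
Proof.
move=> H; have e : tclass (trepr x) = tclass (trepr y).
  apply: (@tclass_eq X Y) => phi bp; exact: (H (fun p => phi p.1 p.2)).
by rewrite -(tclass_trepr x) e tclass_trepr.
Qed.

End TensCore.


Section TensOps.
Variable F : fieldType.
Implicit Types X Y Z W : alg F.

Definition lmap X Y (f : X -> Y) :=
  (forall x y, f (aadd x y) = aadd (f x) (f y)) /\ (forall a x, f (ascale a x) = ascale a (f x)).

Lemma hom_lmap X Y (f : X -> Y) : is_hom f -> lmap f.
Proof. by case. Qed.

Lemma id_lmap X : lmap (@id X).
Proof. by []. Qed.

Lemma comp_lmap X Y Z (f : Y -> Z) (g : X -> Y) : lmap f -> lmap g -> lmap (f \o g).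
Proof. by move=> [f1 f2] [g1 g2]; split => *; rewrite /= ?g1 ?g2 ?f1 ?f2. Qed.

Lemma comp_hom X Y Z (f : Y -> Z) (g : X -> Y) : is_hom f -> is_hom g -> is_hom (f \o g).
Proof. by move=> [f1 f2 f3] [g1 g2 g3]; split => *; rewrite /= ?g1 ?g2 ?g3 ?f1 ?f2 ?f3. Qed.

Lemma bil_map X Y X' Y' (G : (X' * Y')%type -> F) (f : X -> X') (g : Y -> Y') :
  bil G -> lmap f -> lmap g -> bil (fun p => G (f p.1, g p.2)).
Proof.
move=> [G1 G2 G3 G4] [f1 f2] [g1 g2]; split => *; rewrite /= ?f1 ?f2 ?g1 ?g2.
- exact: G1.
- exact: G2.
- exact: G3.
- exact: G4.
Qed.

Lemma bil_sum X Y (I : Type) (t : seq I) (K : (X * Y)%type -> I -> F) :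
  (forall i, bil (fun p => K p i)) -> bil (fun p => \sum_(i <- t) K p i).
Proof.
move=> H; split => *.
- by rewrite -big_split; apply: eq_bigr => i _; case: (H i) => h _ _ _; apply: h.
- by rewrite mulr_sumr; apply: eq_bigr => i _; case: (H i) => _ h _ _; apply: h.
- by rewrite -big_split; apply: eq_bigr => i _; case: (H i) => _ _ h _; apply: h.
- by rewrite mulr_sumr; apply: eq_bigr => i _; case: (H i) => _ _ _ h; apply: h.
Qed.

Lemma bil_scal X Y (G : (X * Y)%type -> F) (c : F) : bil G -> bil (fun p => c * G p).
Proof.
move=> [G1 G2 G3 G4]; split => *; rewrite /=.
- by rewrite G1 mulrDr.
- by rewrite G2 mulrCA.
- by rewrite G3 mulrDr.
- by rewrite G4 mulrCA.
Qed.

Lemma addxx0 (x : F) : x + x = x -> x = 0.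
Proof. by move=> h; apply: (addrI x); rewrite addr0. Qed.

Lemma bil_zero1 X Y (G : (X * Y)%type -> F) c : is_alg X -> bil G -> G (a0 X, c) = 0.
Proof.
move=> [_ [_ [h0 _]]] [G1 _ _ _]; apply: addxx0.
by have := G1 (a0 X) (a0 X) c; rewrite h0 => <-.
Qed.

Lemma bil_zero2 X Y (G : (X * Y)%type -> F) b : is_alg Y -> bil G -> G (b, a0 Y) = 0.
Proof.
move=> [_ [_ [h0 _]]] [_ _ G3 _]; apply: addxx0.
by have := G3 b (a0 Y) (a0 Y); rewrite h0 => <-.
Qed.

Lemma bil_opp1 X Y (G : (X * Y)%type -> F) b c : is_alg X -> bil G -> G (aopp b, c) = - G (b, c).
Proof.
move=> HX bG; have := bil_zero1 c HX bG; case: (HX) => _ [_ [_ [hN _]]].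
rewrite -(hN b); case: bG => G1 _ _ _; rewrite G1 => /eqP; rewrite addr_eq0 => /eqP //.
Qed.

Lemma Tadd X Y (x y : tens X Y) G : bil G ->
  \sum_(p <- trepr (aadd x y)) G p = \sum_(p <- trepr x) G p + \sum_(p <- trepr y) G p.
Proof. by move=> bG; rewrite /= Tcl // big_cat. Qed.

Lemma T0 X Y G : bil G -> \sum_(p <- trepr (a0 (tens X Y))) G p = 0.
Proof. by move=> bG; rewrite /= Tcl // big_nil. Qed.

Lemma Tscale X Y (x : tens X Y) a G : bil G ->
  \sum_(p <- trepr (ascale a x)) G p = a * \sum_(p <- trepr x) G p.
Proof.
move=> bG; rewrite /= Tcl // big_map mulr_sumr; apply: eq_bigr => [[b c]] _ /=.
by case: bG => _ h _ _; apply: h.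
Qed.

Lemma Topp X Y (x : tens X Y) G : is_alg X -> bil G ->
  \sum_(p <- trepr (aopp x)) G p = - \sum_(p <- trepr x) G p.
Proof.
move=> HX bG; rewrite /= Tcl // big_map -sumrN; apply: eq_bigr => [[b c]] _ /=.
exact: bil_opp1.
Qed.

Lemma Tmul X Y (x y : tens X Y) G : bil G ->
  \sum_(p <- trepr (amul x y)) G p =
  \sum_(p <- trepr x) \sum_(q <- trepr y) G (amul p.1 q.1, amul p.2 q.2).
Proof. by move=> bG; rewrite /= Tcl // big_allpairs_dep. Qed.

Lemma Ttmap X Y X' Y' (f : X -> X') (g : Y -> Y') (x : tens X Y) G : bil G ->
  \sum_(p <- trepr (tmap f g x)) G p = \sum_(p <- trepr x) G (f p.1, g p.2).
Proof. by move=> bG; rewrite /tmap Tcl // big_map. Qed.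

Lemma bil_mulr X Y (G : (X * Y)%type -> F) q : is_alg X -> is_alg Y -> bil G ->
  bil (fun p => G (amul p.1 q.1, amul p.2 q.2)).
Proof.
move=> HX HY [G1 G2 G3 G4].
case: HX => _ [_ [_ [_ [_ [_ [_ [_ [_ [X1 [X2 _]]]]]]]]]].
case: HY => _ [_ [_ [_ [_ [_ [_ [_ [_ [Y1 [Y2 _]]]]]]]]]].
by split => *; rewrite /= ?X1 ?X2 ?Y1 ?Y2 ?G1 ?G2 ?G3 ?G4.
Qed.

Lemma bil_mull X Y (G : (X * Y)%type -> F) p : is_alg X -> is_alg Y -> bil G ->
  bil (fun q => G (amul p.1 q.1, amul p.2 q.2)).
Proof.
move=> HX HY [G1 G2 G3 G4].
case: HX => _ [_ [_ [_ [_ [_ [_ [_ [X1 [_ [_ [X2 _]]]]]]]]]]].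
case: HY => _ [_ [_ [_ [_ [_ [_ [_ [Y1 [_ [_ [Y2 _]]]]]]]]]]].
by split => *; rewrite /= ?X1 ?X2 ?Y1 ?Y2 ?G1 ?G2 ?G3 ?G4.
Qed.

Lemma tmap_hom X Y X' Y' (f : X -> X') (g : Y -> Y') :
  is_alg X' -> is_alg Y' -> is_hom f -> is_hom g -> is_hom (tmap f g).
Proof.
move=> HX HY hf hg; have lf := hom_lmap hf; have lg := hom_lmap hg.
case: hf => _ _ f3; case: hg => _ _ g3.
split => [x y|a x|x y]; apply: tens_ext => G bG.
- rewrite Ttmap // Tadd; last exact: (bil_map bG lf lg).
  by rewrite Tadd // !Ttmap.
- rewrite Ttmap // Tscale; last exact: (bil_map bG lf lg).
  by rewrite Tscale // !Ttmap.
- rewrite Ttmap // Tmul; last exact: (bil_map bG lf lg).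
  rewrite Tmul // Ttmap; last by apply: bil_sum => q; exact: bil_mulr.
  apply: eq_bigr => p _; rewrite Ttmap; last exact: bil_mull.
  by apply: eq_bigr => q _; rewrite /= f3 g3.
Qed.

End TensOps.


Definition vt (F : fieldType) (V : alg F) := car V.

Definition vsum (F : fieldType) (V : alg F) (I : Type) (s : seq I) (h : I -> V) : V :=
  foldr (fun p acc => aadd (h p) acc) (a0 V) s.

Section VS.
Variables (F : fieldType) (V : alg F) (HV : is_alg V).
HB.instance Definition _ := gen_eqMixin (vt V).
HB.instance Definition _ := gen_choiceMixin (vt V).
Let addA : forall x y z : vt V, aadd x (aadd y z) = aadd (aadd x y) z := proj1 HV.
Let addC : forall x y : vt V, aadd x y = aadd y x := proj1 (proj2 HV).
Let add0 : forall x : vt V, aadd (a0 V) x = x := proj1 (proj2 (proj2 HV)).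
Let addN : forall x : vt V, aadd (aopp x) x = a0 V := proj1 (proj2 (proj2 (proj2 HV))).
HB.instance Definition _ := GRing.isZmodule.Build (vt V) addA addC add0 addN.
Let sD : forall (a : F) (x y : vt V), ascale a (aadd x y) = aadd (ascale a x) (ascale a y)
  := proj1 (proj2 (proj2 (proj2 (proj2 HV)))).
Let sDl : forall (a b : F) (x : vt V), ascale (a + b) x = aadd (ascale a x) (ascale b x)
  := proj1 (proj2 (proj2 (proj2 (proj2 (proj2 HV))))).
Let sA : forall (a b : F) (x : vt V), ascale a (ascale b x) = ascale (a * b) x
  := proj1 (proj2 (proj2 (proj2 (proj2 (proj2 (proj2 HV)))))).
Let s1 : forall (x : vt V), ascale 1 x = x
  := proj1 (proj2 (proj2 (proj2 (proj2 (proj2 (proj2 (proj2 HV))))))).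
HB.instance Definition _ := GRing.Zmodule_isLmodule.Build F (vt V) sA s1 sD
   (fun v a b => sDl a b v).

Definition lin (X : alg F) (l : X -> F) :=
  (forall x y, l (aadd x y) = l x + l y) /\ (forall c x, l (ascale c x) = c * l x).

Local Open Scope classical_set_scope.
Lemma separation (u v : vt V) : (forall l, lin l -> l u = l v) -> u = v.
Proof.
move=> Hl; apply/eqP/negPn/negP => nuv.
pose w : vt V := (u : vt V) - v.
have wn0 : w != 0 by rewrite subr_eq0.
pose R0 : set (vt V * F) := [set p | exists c, p = (c *: w, c)].
pose islin (G : set (vt V * F)) :=
  [/\ (forall x a b, G (x, a) -> G (x, b) -> a = b), G (0, 0),
      (forall x a y b, G (x, a) -> G (y, b) -> G (x + y, a + b)) &
      (forall c x a, G (x, a) -> G (c *: x, c * a))].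
have linR0 : islin R0.
  split.
  - move=> x a b [c [-> ->]] [c' [e ->]]; apply/eqP; rewrite -subr_eq0.
    have : (c - c') *: w == 0 by rewrite scalerBl e subrr.
    by rewrite scaler_eq0 (negbTE wn0) orbF.
  - by exists 0; rewrite scale0r.
  - by move=> x a y b [c [-> ->]] [c' [-> ->]]; exists (c + c'); rewrite scalerDl.
  - by move=> c x a [c' [-> ->]]; exists (c * c'); rewrite scalerA.
pose P (B : set (vt V * F)) := islin (B `|` R0).
have [A [PA Amax]] : exists A, P A /\ forall B, A `<` B -> ~ P B.
  apply: Zorn_bigcup => Fm FP Ftot.
  have two : forall p q, ((\bigcup_(X in Fm) X) `|` R0) p ->
      ((\bigcup_(X in Fm) X) `|` R0) q ->
      exists G, [/\ islin G, G `<=` ((\bigcup_(X in Fm) X) `|` R0), G p & G q].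
    move=> p q [[X FX Xp]|R0p] [[Y FY Yq]|R0q].
    - case: (Ftot X Y FX FY) => [XY|YX].
      + exists (Y `|` R0); split; [exact: FP|by move=> t [Yt|Rt]; [left; exists Y|right]|left; exact: XY|by left].
      + exists (X `|` R0); split; [exact: FP|by move=> t [Xt|Rt]; [left; exists X|right]|by left|left; exact: YX].
    - exists (X `|` R0); split; [exact: FP|by move=> t [Xt|Rt]; [left; exists X|right]|by left|by right].
    - exists (Y `|` R0); split; [exact: FP|by move=> t [Yt|Rt]; [left; exists Y|right]|by right|by left].
    - by exists R0; split => // t Rt; right.
  split.
  - move=> x a b Ha Hb; have [G [[fG _ _ _] _ Ga Gb]] := two _ _ Ha Hb; exact: fG Ga Gb.
  - by right; case: linR0.
  - move=> x a y b Ha Hb; have [G [[_ _ aG _] sG Ga Gb]] := two _ _ Ha Hb; exact/sG/aG.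
  - move=> c x a Ha; have [G [[_ _ _ sG] sub Ga _]] := two _ _ Ha Ha; exact/sub/sG.
have R0A : R0 `<=` A.
  move=> t R0t; apply: contrapT => nAt; apply: (Amax (A `|` R0)).
    split; first by move=> s As; left.
    by move=> /(_ t (or_intror R0t)).
  by rewrite /P -setUA setUid.
have AR : A `|` R0 = A by apply/seteqP; split => [t [//|/R0A//]|t At]; left.
have linA : islin A by rewrite -AR.
case: linA => fA A00 aA sAA.
have totA : forall z, exists a, A (z, a).
  move=> z; apply: contrapT => nz.
  pose G' : set (vt V * F) := [set p | exists x a c, A (x, a) /\ p = (x + c *: z, a)].
  apply: (Amax G').
    split; first by move=> [x a] Ax; exists x, a, 0; rewrite scale0r addr0.
    move=> /(_ (z, 0)) H; apply: nz; exists 0; apply: H.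
    by exists 0, 0, 1; rewrite scale1r add0r.
  have R0G' : R0 `<=` G' by move=> t /R0A At; case: t At => x a Ax; exists x, a, 0; rewrite scale0r addr0.
  rewrite /P; have -> : G' `|` R0 = G' by apply/seteqP; split => [t [//|/R0G'//]|t Gt]; left.
  split.
  - move=> x a b [y [a' [c [Ay [ex ea]]]]] [y' [b' [c' [Ay' [ex' eb]]]]].
    rewrite ea eb; have e : y + c *: z = y' + c' *: z by rewrite -ex -ex'.
    have [cc|cnc] := eqVneq c c'.
      by move: e; rewrite cc => /addIr ey; rewrite ey in Ay; exact: fA Ay Ay'.
    exfalso; apply: nz; exists ((c - c')^-1 * (b' - a')).
    have -> : z = (c - c')^-1 *: (y' - y).
      apply: (@scalerI _ _ (c - c')); first by rewrite subr_eq0.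
      rewrite scalerA mulfV ?subr_eq0 // scale1r scalerBl.
      apply: (addIr y); rewrite subrK; apply: (addIr (c' *: z)); by rewrite -e addrAC subrK addrC.
    apply: (sAA ((c - c')^-1) (y' - y) (b' - a')).
    have := sAA (-1) _ _ Ay; rewrite scaleN1r mulN1r => Ay''; exact: aA Ay' Ay''.
  - by exists 0, 0, 0; rewrite scale0r addr0.
  - move=> x a y b [x1 [a1 [c1 [A1 [-> ->]]]]] [y1 [b1 [d1 [B1 [-> ->]]]]].
    exists (x1 + y1), (a1 + b1), (c1 + d1); split; first exact: aA.
    by rewrite scalerDl; congr (_, _); rewrite addrACA.
  - move=> c x a [x1 [a1 [c1 [A1 [-> ->]]]]].
    exists (c *: x1), (c * a1), (c * c1); split; first exact: sAA.
    by rewrite scalerDr scalerA.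
pose l (x : V) : F := projT1 (cid (totA x)).
have lA : forall x, A (x, l x) by move=> x; exact: (projT2 (cid (totA x))).
have linl : lin l.
  split.
  - move=> x y; apply: (fA (aadd x y)); first exact: lA.
    exact: (aA _ _ _ _ (lA x) (lA y)).
  - move=> c x; apply: (fA (ascale c x)); first exact: lA.
    exact: (sAA c _ _ (lA x)).
have lw1 : l w = 1.
  apply: (fA w); first exact: lA.
  by apply: R0A; exists 1; rewrite scale1r.
have lw0 : l w = 0.
  apply: (fA w); first exact: lA.
  have := sAA (-1) _ _ (lA v); rewrite scaleN1r mulN1r => Av.
  have := aA _ _ _ _ (lA u) Av; rewrite (Hl l linl) subrr; exact.
by move: lw1; rewrite lw0 => /eqP; rewrite eq_sym oner_eq0.
Qed.
Local Close Scope classical_set_scope.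
Let mD : forall x y z : vt V, amul x (aadd y z) = aadd (amul x y) (amul x z)
  := proj1 (proj2 (proj2 (proj2 (proj2 (proj2 (proj2 (proj2 (proj2 HV)))))))).
Let mDl : forall x y z : vt V, amul (aadd x y) z = aadd (amul x z) (amul y z)
  := proj1 (proj2 (proj2 (proj2 (proj2 (proj2 (proj2 (proj2 (proj2 (proj2 HV))))))))).
Let mZl : forall (a : F) (x y : vt V), amul (ascale a x) y = ascale a (amul x y)
  := proj1 (proj2 (proj2 (proj2 (proj2 (proj2 (proj2 (proj2 (proj2 (proj2 (proj2 HV)))))))))).
Let mZr : forall (a : F) (x y : vt V), amul x (ascale a y) = ascale a (amul x y)
  := proj1 (proj2 (proj2 (proj2 (proj2 (proj2 (proj2 (proj2 (proj2 (proj2 (proj2 (proj2 HV))))))))))).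

Lemma xx0 (y : V) : aadd y y = y -> y = a0 V.
Proof. move=> h; apply: (@addrI _ (y : vt V)); rewrite addr0; exact: h. Qed.

Lemma vsumE (I : Type) (s : seq I) (h : I -> V) : vsum s h = \sum_(p <- s) (h p : vt V).
Proof. by elim: s => [|p s IH]; rewrite ?big_nil ?big_cons //= IH. Qed.

Lemma lin0 (l : V -> F) : lin l -> l (a0 V) = 0.
Proof. by case=> l1 _; apply: addxx0; rewrite -l1 add0. Qed.

Lemma lin_vsum (l : V -> F) (I : Type) (s : seq I) (h : I -> V) :
  lin l -> l (vsum s h) = \sum_(p <- s) l (h p).
Proof.
move=> ll; elim: s => [|p s IH]; rewrite ?big_nil ?big_cons /=; first exact: lin0.
by case: ll => l1 _; rewrite l1 IH.
Qed.

Lemma bil_ev (l : V -> F) (a : F) : lin l -> bil (fun p : (V * polyA F)%type => (p.2 : {poly F}).[a] * l p.1).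
Proof.
case=> l1 l2; split => /=.
- by move=> b b' c; rewrite l1 mulrDr.
- by move=> c b q; rewrite l2 mulrCA.
- by move=> b q q'; rewrite hornerD mulrDl.
- by move=> c b q; rewrite hornerZ mulrA.
Qed.

Lemma lin_ev (l : V -> F) (a : F) (x : tens V (polyA F)) : lin l ->
  l (ev a x) = \sum_(p <- trepr x) (p.2 : {poly F}).[a] * l p.1.
Proof.
move=> ll; rewrite /ev -/(vsum _ _) lin_vsum //; apply: eq_bigr => p _.
by case: ll => _ ->.
Qed.

Lemma ev_cl (a : F) (s : seq (V * polyA F)%type) :
  ev a (tclass s) = vsum s (fun p => ascale (p.2 : {poly F}).[a] p.1).
Proof.
apply: separation => l ll; rewrite lin_ev // Tcl; last exact: bil_ev.
by rewrite lin_vsum //; apply: eq_bigr => p _; case: ll => _ ->.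
Qed.

Lemma amul_suml (I : Type) (s : seq I) (h : I -> vt V) (v : vt V) :
  amul (\sum_(i <- s) h i) v = \sum_(i <- s) (amul (h i) v : vt V).
Proof.
elim: s => [|i s IH]; rewrite ?big_nil ?big_cons.
  by apply: xx0; rewrite -mDl; congr amul; exact: add0.
by rewrite -IH; exact: mDl.
Qed.

Lemma amul_sumr (I : Type) (s : seq I) (h : I -> vt V) (v : vt V) :
  amul v (\sum_(i <- s) h i) = \sum_(i <- s) (amul v (h i) : vt V).
Proof.
elim: s => [|i s IH]; rewrite ?big_nil ?big_cons.
  by apply: xx0; rewrite -mD; congr amul; exact: add0.
by rewrite -IH; exact: mD.
Qed.

Lemma ascaleE c (v : vt V) : ascale c v = c *: v. Proof. by []. Qed.
Lemma amulE (u v : vt V) : amul u v = amul u v. Proof. by []. Qed.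

Lemma ev_hom (a : F) : is_hom (ev a : tens V (polyA F) -> V).
Proof.
split.
- move=> x y; rewrite [aadd x y]/= ev_cl /ev -!/(vsum _ _) !vsumE big_cat //.
- move=> c x; rewrite [ascale c x]/= ev_cl /ev -!/(vsum _ _) !vsumE big_map ascaleE scaler_sumr.
  by apply: eq_bigr => p _ /=; rewrite !ascaleE scalerA mulrC -scalerA.
- move=> x y; rewrite [amul x y]/= ev_cl /ev -!/(vsum _ _) !vsumE big_allpairs_dep amul_suml.
  apply: eq_bigr => p _; rewrite mZl amul_sumr ascaleE scaler_sumr.
  apply: eq_bigr => q _; rewrite /= hornerM mZr !ascaleE.
  by rewrite -scalerA.
Qed.

End VS.

Lemma hom_vsum (F : fieldType) (V W : alg F) (f : V -> W) (I : Type) (s : seq I) (h : I -> V) :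
  is_alg V -> is_alg W -> lmap f -> f (vsum s h) = vsum s (fun i => f (h i)).
Proof.
move=> HV HW [f1 _]; elim: s => [|i s IH] /=; last by rewrite f1 IH.
apply: xx0 => //; rewrite -f1; congr f; exact: (proj1 (proj2 (proj2 HV))).
Qed.

Lemma ev_nat (F : fieldType) (V W : alg F) (f : V -> W) (a : F) (x : tens V (polyA F)) :
  is_alg V -> is_alg W -> is_hom f -> f (ev a x) = ev a (tmap f id x).
Proof.
move=> HV HW hf; rewrite /tmap ev_cl // /ev -/(vsum _ _) hom_vsum //; last exact: hom_lmap.
rewrite /vsum foldr_map; case: hf => _ h2 _.
by elim: (trepr x) => //= p s ->; rewrite h2.
Qed.



Section TensAlg.
Variable F : fieldType.
Implicit Types X Y Z W : alg F.

Lemma tens_alg X Y : is_alg X -> is_alg Y -> is_alg (tens X Y).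
Proof.
move=> HX HY.
have bl := fun G p (bG : bil G) => bil_mull p HX HY bG.
have br := fun G q (bG : bil G) => bil_mulr q HX HY bG.
case: (HX) => _ [_ [_ [_ [_ [_ [_ [_ [_ [_ [_ [_ XA]]]]]]]]]]].
case: (HY) => _ [_ [_ [_ [_ [_ [_ [_ [_ [_ [_ [_ YA]]]]]]]]]]].
split; [|split; [|split; [|split; [|split; [|split; [|split; [|split;
   [|split; [|split; [|split; [|split]]]]]]]]]]].
- by move=> x y z; apply: tens_ext => G bG; rewrite !Tadd // addrA.
- by move=> x y; apply: tens_ext => G bG; rewrite !Tadd // addrC.
- by move=> x; apply: tens_ext => G bG; rewrite Tadd // T0 // add0r.
- by move=> x; apply: tens_ext => G bG; rewrite Tadd // Topp // T0 // addNr.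
- by move=> a x y; apply: tens_ext => G bG; rewrite Tscale // !Tadd // !Tscale // mulrDr.
- by move=> a b x; apply: tens_ext => G bG; rewrite Tscale // !Tadd // !Tscale // mulrDl.
- by move=> a b x; apply: tens_ext => G bG; rewrite !Tscale // mulrA.
- by move=> x; apply: tens_ext => G bG; rewrite Tscale // mul1r.
- move=> x y z; apply: tens_ext => G bG; rewrite Tmul // Tadd // !Tmul // -big_split.
  by apply: eq_bigr => p _; rewrite Tadd //; exact: bl.
- move=> x y z; apply: tens_ext => G bG; rewrite Tmul // Tadd // !Tmul // Tadd //; by apply: bil_sum => q; exact: br.
- move=> a x y; apply: tens_ext => G bG; rewrite Tmul // [in RHS]Tscale // Tmul // Tscale //.
  by apply: bil_sum => q; exact: br.
- move=> a x y; apply: tens_ext => G bG; rewrite Tmul // Tscale // Tmul // mulr_sumr.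
  by apply: eq_bigr => p _; rewrite Tscale //; exact: bl.
- move=> x y z; apply: tens_ext => G bG; rewrite [in LHS]Tmul // [in RHS]Tmul // [in RHS]Tmul; last first.
    by apply: bil_sum => q; exact: br.
  apply: eq_bigr => p _; rewrite Tmul //; last exact: bl.
  by apply: eq_bigr => q _; apply: eq_bigr => r _; rewrite /= XA YA.
Qed.

Lemma poly_alg : is_alg (polyA F).
Proof.
split; [|split; [|split; [|split; [|split; [|split; [|split; [|split;
   [|split; [|split; [|split; [|split]]]]]]]]]]]; rewrite /=.
- exact: addrA.
- exact: addrC.
- exact: add0r.
- exact: addNr.
- exact: scalerDr.
- by move=> a b x; rewrite scalerDl.
- exact: scalerA.
- exact: scale1r.
- exact: mulrDr.
- exact: mulrDl.
- by move=> a x y; rewrite scalerAl.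
- by move=> a x y; rewrite scalerAr.
- exact: mulrA.
Qed.

End TensAlg.


Section Gen.
Variable F : fieldType.
Implicit Types X Y Z W : alg F.

Lemma tmap_cl X Y X' Y' (f : X -> X') (g : Y -> Y') (s : seq (X * Y)%type) :
  lmap f -> lmap g -> tmap f g (tclass s) = tclass [seq (f p.1, g p.2) | p <- s].
Proof.
move=> lf lg; apply: tens_ext => G bG; rewrite Ttmap // !Tcl ?big_map //.
exact: (bil_map bG lf lg).
Qed.

Lemma tmap_comp X Y X' Y' X'' Y'' (f : X -> X') (g : Y -> Y') (f' : X' -> X'') (g' : Y' -> Y'')
  (x : tens X Y) :
  lmap f' -> lmap g' -> tmap f' g' (tmap f g x) = tmap (f' \o f) (g' \o g) x.
Proof. by move=> l1 l2; apply: tens_ext => G bG; rewrite !Ttmap //; exact: (bil_map bG l1 l2). Qed.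

Lemma tmap_ext X Y X' Y' (f f' : X -> X') (g g' : Y -> Y') (x : tens X Y) :
  (forall a, f a = f' a) -> (forall b, g b = g' b) -> tmap f g x = tmap f' g' x.
Proof. by move=> ef eg; rewrite /tmap; congr tclass; apply: eq_map => p; rewrite ef eg. Qed.

Lemma lin_Tadd X Y Z (h : Z -> tens X Y) G z z' : lmap h -> bil G ->
  \sum_(p <- trepr (h (aadd z z'))) G p = \sum_(p <- trepr (h z)) G p + \sum_(p <- trepr (h z')) G p.
Proof. by case=> h1 _ bG; rewrite h1 Tadd. Qed.

Lemma lin_Tscale X Y Z (h : Z -> tens X Y) G c z : lmap h -> bil G ->
  \sum_(p <- trepr (h (ascale c z))) G p = c * \sum_(p <- trepr (h z)) G p.
Proof. by case=> _ h2 bG; rewrite h2 Tscale. Qed.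

Lemma lin_T X Y Z (h : Z -> tens X Y) G : lmap h -> bil G ->
  lin (fun z => \sum_(p <- trepr (h z)) G p).
Proof. by move=> lh bG; split => *; [exact: lin_Tadd|exact: lin_Tscale]. Qed.

Lemma lin_bil1 X Y G (c : Y) : bil G -> lin (fun b : X => G (b, c)).
Proof. by case=> G1 G2 _ _; split => *; [exact: G1|exact: G2]. Qed.

Definition nn X Y (m : X) (q : Y) : tens X Y := tclass [:: (m, q)].

Lemma Tnn X Y (m : X) (q : Y) G : bil G -> \sum_(p <- trepr (nn m q)) G p = G (m, q).
Proof. by move=> bG; rewrite Tcl // big_seq1. Qed.

Lemma nn_addl X Y (m m' : X) (q : Y) : nn (aadd m m') q = aadd (nn m q) (nn m' q).
Proof. by apply: tens_ext => G bG; rewrite Tadd // !Tnn //; case: bG => h _ _ _; exact: h. Qed.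

Lemma nn_addr X Y (m : X) (q q' : Y) : nn m (aadd q q') = aadd (nn m q) (nn m q').
Proof. by apply: tens_ext => G bG; rewrite Tadd // !Tnn //; case: bG => _ _ h _; exact: h. Qed.

Lemma nn_scalel X Y (m : X) (q : Y) c : nn (ascale c m) q = ascale c (nn m q).
Proof. by apply: tens_ext => G bG; rewrite Tscale // !Tnn //; case: bG => _ h _ _; exact: h. Qed.

Lemma nn_scaler X Y (m : X) (q : Y) c : nn m (ascale c q) = ascale c (nn m q).
Proof. by apply: tens_ext => G bG; rewrite Tscale // !Tnn //; case: bG => _ _ _ h; exact: h. Qed.

Lemma nn_mul X Y (m m' : X) (q q' : Y) : is_alg X -> is_alg Y ->
  amul (nn m q) (nn m' q') = nn (amul m m') (amul q q').
Proof.
move=> HX HY; apply: tens_ext => G bG; rewrite Tmul // [in RHS]Tnn // [in LHS]Tnn; last first.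
  by apply: bil_sum => p; exact: (bil_mulr _ HX HY bG).
by rewrite Tnn //; exact: (bil_mull _ HX HY bG).
Qed.

Lemma tmap_nn X Y X' Y' (f : X -> X') (g : Y -> Y') (m : X) (q : Y) :
  lmap f -> lmap g -> tmap f g (nn m q) = nn (f m) (g q).
Proof. by move=> lf lg; rewrite /nn tmap_cl. Qed.

Lemma ev_nn X (HX : is_alg X) a (m : X) (q : polyA F) : ev a (nn m q) = ascale (q : {poly F}).[a] m.
Proof.
rewrite /nn ev_cl //=; case: HX => _ [addC [add0 _]]; by rewrite addC add0.
Qed.

End Gen.


Lemma reorder6 (F : fieldType) (T1 T2 T3 : Type) (s1 s1' : seq T1) (s2 : T1 -> seq T2) (s3 : T2 -> seq T3)
  (E : T1 -> T2 -> T3 -> T1 -> T2 -> T3 -> F) :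
  \sum_(a1 <- s1) \sum_(b1 <- s2 a1) \sum_(c1 <- s3 b1) \sum_(a2 <- s1') \sum_(b2 <- s2 a2)
     \sum_(c2 <- s3 b2) E a1 b1 c1 a2 b2 c2 =
  \sum_(a1 <- s1) \sum_(a2 <- s1') \sum_(b1 <- s2 a1) \sum_(b2 <- s2 a2) \sum_(c1 <- s3 b1)
     \sum_(c2 <- s3 b2) E a1 b1 c1 a2 b2 c2.
Proof.
apply: eq_bigr => a1 _; rewrite [RHS]exchange_big; apply: eq_bigr => b1 _.
rewrite exchange_big; apply: eq_bigr => a2 _; exact: exchange_big.
Qed.

Lemma polyP_proalg (F : fieldType) (M : proalg F) : is_proalg M -> is_proalg (Defs.polyP M).
Proof.
case=> r [t [inh [dir [alg [hom [pid pcomp]]]]]].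
split; first exact: r. split; first exact: t. split; first exact: inh.
split; first exact: dir. split; first by move=> i; apply: tens_alg => //; exact: poly_alg.
split; first by move=> i j h; apply: tmap_hom => //; exact: poly_alg.
split.
  move=> i h x /=; rewrite -[RHS]tclass_trepr /tmap; congr tclass.
  by rewrite -[RHS]map_id; apply: eq_map => [[b c]] /=; rewrite pid.
move=> i j k hij hjk hik x /=; rewrite tmap_comp; last 2 first.
- exact: hom_lmap (hom i j hij).
- exact: id_lmap.
by apply: tmap_ext => // y /=; rewrite pcomp.
Qed.

Section Main.
Variable F : fieldType.
Variables (A A' B B' : alg F).
Hypotheses (HA' : is_alg A') (HB : is_alg B) (HB' : is_alg B').
Variable M : proalg F.
Hypothesis HM : is_proalg M.
Variable U : promor (constP A') (tensP B M).
Hypothesis HU : is_promor U.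
Variables (Hf : A -> tens A' (polyA F)) (Hg : B -> tens B' (polyA F)).
Hypotheses (hHf : is_hom Hf) (hHg : is_hom Hg).

Let HMj j : is_alg (@pobj _ M j) := proj1 (proj2 (proj2 (proj2 (proj2 HM)))) j.
Let HP : is_alg (polyA F) := poly_alg F.

Definition Uj j (a : A') : tens B (@pobj _ M j) := @pm_map _ _ _ U j a.
Lemma Uj_hom j : is_hom (Uj j). Proof. exact: (proj1 HU j). Qed.

Lemma Ucompat j j' (h : @ple _ M j j') a : tmap id (@ptr _ M _ _ h) (Uj j' a) = Uj j a.
Proof. by case: (proj2 HU j j' h) => k [hk [hk' e]]; exact: (e a). Qed.

Definition pmul (p q : polyA F) : polyA F := (p : {poly F}) * (q : {poly F}).

Definition Kl j (x : A) : seq (B' * tens (@pobj _ M j) (polyA F))%type :=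
  flatten [seq flatten [seq [seq (r.1, nn bm.2 (pmul r.2 ap.2))
     | r <- trepr (Hg bm.1)] | bm <- trepr (Uj j ap.1)] | ap <- trepr (Hf x)].
Definition Kmap j (x : A) : tens B' (tens (@pobj _ M j) (polyA F)) := tclass (Kl j x).

Lemma TK j x (G : (B' * tens (@pobj _ M j) (polyA F))%type -> F) : bil G ->
  \sum_(u <- trepr (Kmap j x)) G u =
  \sum_(ap <- trepr (Hf x)) \sum_(bm <- trepr (Uj j ap.1)) \sum_(r <- trepr (Hg bm.1))
     G (r.1, nn bm.2 (pmul r.2 ap.2)).
Proof.
move=> bG; rewrite Tcl // /Kl big_flatten big_map; apply: eq_bigr => ap _.
rewrite big_flatten big_map; apply: eq_bigr => bm _; by rewrite big_map.
Qed.

Section Bil.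
Variables (j : pidx M) (G : (B' * tens (@pobj _ M j) (polyA F))%type -> F).
Hypothesis bG : bil G.

Definition G3 (m : @pobj _ M j) (p : polyA F) (r : (B' * polyA F)%type) :=
  G (r.1, nn m (pmul r.2 p)).
Definition G2 (p : polyA F) (bm : (B * @pobj _ M j)%type) :=
  \sum_(r <- trepr (Hg bm.1)) G3 bm.2 p r.
Definition G1 (ap : (A' * polyA F)%type) :=
  \sum_(bm <- trepr (Uj j ap.1)) G2 ap.2 bm.

Lemma bil_G3 m p : bil (G3 m p).
Proof.
case: bG => g1 g2 g3 g4; split.
- by move=> *; rewrite /G3 /= g1.
- by move=> *; rewrite /G3 /= g2.
- move=> b q q'; rewrite /G3.
  have -> : nn m (pmul (aadd q q') p) = aadd (nn m (pmul q p)) (nn m (pmul q' p)).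
    by rewrite /pmul /= mulrDl; exact: nn_addr.
  by rewrite g3.
- move=> c b q; rewrite /G3.
  have -> : nn m (pmul (ascale c q) p) = ascale c (nn m (pmul q p)).
    by rewrite /pmul /= -scalerAl; exact: nn_scaler.
  by rewrite g4.
Qed.

Lemma bil_G2 p : bil (G2 p).
Proof.
have lHg := hom_lmap hHg.
case: (bG) => g1 g2 g3 g4; split.
- by move=> b b' m; rewrite /G2 /=; apply: (lin_Tadd b b' lHg (bil_G3 m p)).
- by move=> c b m; rewrite /G2 /=; apply: (lin_Tscale c b lHg (bil_G3 m p)).
- move=> b m m'; rewrite /G2 /= -big_split; apply: eq_bigr => r _.
  by rewrite /G3 nn_addl g3.
- move=> c b m; rewrite /G2 /= mulr_sumr; apply: eq_bigr => r _.
  by rewrite /G3 nn_scalel g4.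
Qed.

Lemma bil_G1 : bil G1.
Proof.
have lU := hom_lmap (Uj_hom j).
case: (bG) => g1 g2 g3 g4; split.
- by move=> a a' p; rewrite /G1 /= lin_Tadd //; exact: bil_G2.
- by move=> c a p; rewrite /G1 /= lin_Tscale //; exact: bil_G2.
- move=> a p p'; rewrite /G1 /= -big_split; apply: eq_bigr => bm _.
  rewrite /G2 -big_split; apply: eq_bigr => r _; rewrite /G3.
  have -> : nn bm.2 (pmul r.2 (aadd p p')) = aadd (nn bm.2 (pmul r.2 p)) (nn bm.2 (pmul r.2 p')).
    by rewrite /pmul /= mulrDr; exact: nn_addr.
  by rewrite g3.
- move=> c a p; rewrite /G1 /= mulr_sumr; apply: eq_bigr => bm _.
  rewrite /G2 mulr_sumr; apply: eq_bigr => r _; rewrite /G3.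
  have -> : nn bm.2 (pmul r.2 (ascale c p)) = ascale c (nn bm.2 (pmul r.2 p)).
    by rewrite /pmul /= -scalerAr; exact: nn_scaler.
  by rewrite g4.
Qed.

Lemma TK1 x : \sum_(u <- trepr (Kmap j x)) G u = \sum_(ap <- trepr (Hf x)) G1 ap.
Proof. by rewrite TK. Qed.

End Bil.

Lemma K_hom j : is_hom (Kmap j).
Proof.
have HT : is_alg (tens (@pobj _ M j) (polyA F)) := tens_alg (HMj j) HP.
have [f1 f2 f3] := hHf. have [g1 g2 g3] := hHg. have [u1 u2 u3] := Uj_hom j.
split.
- move=> x y; apply: tens_ext => G bG.
  by rewrite (TK1 bG) (lin_Tadd x y (hom_lmap hHf) (bil_G1 bG)) Tadd // !(TK1 bG).
- move=> c x; apply: tens_ext => G bG.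
  by rewrite (TK1 bG) (lin_Tscale c x (hom_lmap hHf) (bil_G1 bG)) Tscale // (TK1 bG).
- move=> x y; apply: tens_ext => G bG.
  have bGm : forall q, bil (fun p => G (amul p.1 q.1, amul p.2 q.2)) :=
    fun q => bil_mulr q HB' HT bG.
  have bGl : forall p, bil (fun q => G (amul p.1 q.1, amul p.2 q.2)) :=
    fun p => bil_mull p HB' HT bG.
  rewrite (TK1 bG) f3 (Tmul _ _ (bil_G1 bG)) [in RHS]Tmul // (TK _ (bil_sum _ bGm)).
  pose E (a1 : (A' * polyA F)%type) (b1 : (B * @pobj _ M j)%type) (c1 : (B' * polyA F)%type)
         (a2 : (A' * polyA F)%type) (b2 : (B * @pobj _ M j)%type) (c2 : (B' * polyA F)%type) :=
    G (amul c1.1 c2.1, nn (amul b1.2 b2.2) (pmul (pmul c1.2 a1.2) (pmul c2.2 a2.2))).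
  transitivity (\sum_(a1 <- trepr (Hf x)) \sum_(a2 <- trepr (Hf y))
     \sum_(b1 <- trepr (Uj j a1.1)) \sum_(b2 <- trepr (Uj j a2.1))
     \sum_(c1 <- trepr (Hg b1.1)) \sum_(c2 <- trepr (Hg b2.1)) E a1 b1 c1 a2 b2 c2).
    apply: eq_bigr => a1 _; apply: eq_bigr => a2 _.
    rewrite /G1 /= u3 (Tmul _ _ (bil_G2 bG _)).
    apply: eq_bigr => b1 _; apply: eq_bigr => b2 _.
    rewrite /G2 /= g3 (Tmul _ _ (bil_G3 bG _ _)).
    apply: eq_bigr => c1 _; apply: eq_bigr => c2 _.
    by rewrite /G3 /E /pmul /= mulrACA.
  rewrite -reorder6; apply: eq_bigr => a1 _; apply: eq_bigr => b1 _; apply: eq_bigr => c1 _.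
  rewrite (TK _ (bGl _)); apply: eq_bigr => a2 _; apply: eq_bigr => b2 _; apply: eq_bigr => c2 _.
  by rewrite /E (nn_mul _ _ _ _ (HMj j) HP).
Qed.

Lemma id_hom (X : alg F) : is_hom (@id X). Proof. by []. Qed.

Lemma K_compat j j' (h : @ple _ M j j') x :
  tmap id (tmap (@ptr _ M _ _ h) id) (Kmap j' x) = Kmap j x.
Proof.
have Hptr : is_hom (@ptr _ M _ _ h) := proj1 (proj2 (proj2 (proj2 (proj2 (proj2 HM))))) j j' h.
have lptr := hom_lmap Hptr.
have lT : lmap (tmap (@ptr _ M _ _ h) (@id (polyA F))) :=
  hom_lmap (tmap_hom (HMj j) HP Hptr (id_hom _)).
apply: tens_ext => G bG.
rewrite Ttmap // (TK _ (bil_map bG (id_lmap _) lT)) (TK _ bG).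
apply: eq_bigr => ap _.
rewrite -(Ucompat h) Ttmap; last exact: (bil_G2 bG ap.2).
apply: eq_bigr => bm _; apply: eq_bigr => r _.
by rewrite /= tmap_nn //; exact: id_lmap.
Qed.

Lemma K_ev (a : F) (fa : A -> A') (ga : B -> B') (lga : lmap ga)
  (Wf : forall l, lin l -> forall x, \sum_(p <- trepr (Hf x)) (p.2 : {poly F}).[a] * l p.1 = l (fa x))
  (Wg : forall l, lin l -> forall b, \sum_(p <- trepr (Hg b)) (p.2 : {poly F}).[a] * l p.1 = l (ga b))
  j x : tmap id (ev a) (Kmap j x) = tmap ga id (Uj j (fa x)).
Proof.
apply: tens_ext => G bG.
have lev : lmap (ev a : tens (@pobj _ M j) (polyA F) -> _) := hom_lmap (ev_hom (HMj j) a).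
rewrite Ttmap // (TK _ (bil_map bG (id_lmap _) lev)) Ttmap //.
pose L (a' : A') := \sum_(bm <- trepr (Uj j a')) G (ga bm.1, bm.2).
have lL : lin L := lin_T (hom_lmap (Uj_hom j)) (bil_map bG lga (id_lmap _)).
rewrite -[RHS]/(L (fa x)) -Wf //; apply: eq_bigr => ap _.
rewrite /L mulr_sumr; apply: eq_bigr => bm _.
have := Wg _ (lin_bil1 bm.2 bG) bm.1; rewrite /= => <-.
rewrite mulr_sumr; apply: eq_bigr => r _.
rewrite /= ev_nn //; case: bG => _ _ _ ->.
by rewrite /pmul hornerM -mulrA mulrCA.
Qed.

End Main.


Section Pro.
Variable F : fieldType.

Lemma germ_sym (C : proalg F) (X : alg F) i (f : @pobj _ C i -> X) i' (f' : @pobj _ C i' -> X) :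
  germ_eq f f' -> germ_eq f' f.
Proof. by case=> k [hk [hk' e]]; exists k, hk', hk => x; rewrite e. Qed.

Lemma germ_trans (C : proalg F) (X : alg F) i1 (f1 : @pobj _ C i1 -> X) i2 (f2 : @pobj _ C i2 -> X)
  i3 (f3 : @pobj _ C i3 -> X) : is_proalg C -> germ_eq f1 f2 -> germ_eq f2 f3 -> germ_eq f1 f3.
Proof.
case=> _ [tr [_ [dir [_ [_ [_ pc]]]]]].
case=> k1 [h1 [h2 e1]] [k2 [h2' [h3 e2]]].
have [k [hk1 hk2]] := dir k1 k2.
pose H13 := tr _ _ _ h1 hk1; pose H3 := tr _ _ _ h3 hk2; pose p2 := tr _ _ _ h2 hk1.
exists k, H13, H3 => x.
rewrite -(pc _ _ _ h1 hk1 H13 x) e1 (pc _ _ _ h2 hk1 p2 x) -(pc _ _ _ h2' hk2 p2 x) e2.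
by rewrite (pc _ _ _ h3 hk2 H3 x).
Qed.

Lemma pm_eq_sym (C D : proalg F) (p q : promor C D) : pm_eq p q -> pm_eq q p.
Proof. by move=> e j; apply: germ_sym. Qed.

Lemma pm_eq_trans (C D : proalg F) (p q r : promor C D) : is_proalg C ->
  pm_eq p q -> pm_eq q r -> pm_eq p r.
Proof. by move=> HC e1 e2 j; exact: germ_trans HC (e1 j) (e2 j). Qed.

Definition WHa (X Y : alg F) (a : F) (H : X -> tens Y (polyA F)) (f : X -> Y) :=
  forall l, lin l -> forall x, \sum_(p <- trepr (H x)) (p.2 : {poly F}).[a] * l p.1 = l (f x).

Definition WH (X Y : alg F) (f f' : X -> Y) :=
  is_hom f /\ is_hom f' /\ exists H, is_hom H /\ WHa 0 H f /\ WHa 1 H f'.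

Lemma WH_elem (X Y : alg F) (f f' : X -> Y) : is_alg Y -> elem_htpy f f' -> WH f f'.
Proof.
move=> HY [hf [hf' [H [hH [e0 e1]]]]]; split => //; split => //; exists H; split => //.
by split => l ll x; rewrite -?e0 -?e1 lin_ev.
Qed.

Lemma WH_refl (X Y : alg F) (f : X -> Y) : is_alg Y -> is_hom f -> WH f f.
Proof.
move=> HY hf; have HP := poly_alg F; split => //; split => //.
case: (hf) => f1 f2 f3.
exists (fun x => nn (f x) (1 : polyA F)); split.
  split => *.
  - by rewrite f1 nn_addl.
  - by rewrite f2 nn_scalel.
  - by rewrite nn_mul // f3 /= mulr1.
have h1 : forall a : F, (1 : {poly F}).[a] = 1 by move=> a; rewrite -polyC1 hornerC.
by split => l ll x; rewrite Tnn ?h1 ?mul1r //; apply: bil_ev.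
Qed.

Definition Phi (A A' B B' : alg F) (M : proalg F) (U : promor (constP A') (tensP B M))
  (f : A -> A') (g : B -> B') := pm_comp (gtens g M) (pm_comp U (const_mor f)).

Lemma Phi_promor (A A' B B' : alg F) (M : proalg F) (U : promor (constP A') (tensP B M))
  (f : A -> A') (g : B -> B') : is_alg B -> is_alg B' -> is_proalg M -> is_promor U ->
  is_hom f -> is_hom g -> is_promor (Phi U f g).
Proof.
move=> HB HB' HM HU hf hg.
have HMj j : is_alg (@pobj _ M j) := proj1 (proj2 (proj2 (proj2 (proj2 HM)))) j.
split.
  move=> j; have hU := proj1 HU j.
  have hT := tmap_hom HB' (HMj j) hg (id_hom (@pobj _ M j)).
  case: hf => f1 f2 f3; case: hU => u1 u2 u3; case: hT => t1 t2 t3.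
  by split => * /=; rewrite ?f1 ?f2 ?f3 ?u1 ?u2 ?u3 ?t1 ?t2 ?t3.
move=> j j' h; exists tt, I, I => x /=.
have Hptr : is_hom (@ptr _ M _ _ h) := proj1 (proj2 (proj2 (proj2 (proj2 (proj2 HM))))) j j' h.
have e := Ucompat HU h (f x); rewrite /Uj in e; rewrite -e !tmap_comp; first by apply: tmap_ext.
all: first [exact: id_lmap | exact: hom_lmap].
Qed.

End Pro.


Section Step.
Variable F : fieldType.
Variables (A A' B B' : alg F) (M1 M2 : proalg F).
Variables (U1 : promor (constP A) (tensP B' M1)) (U2 : promor (constP A') (tensP B M2)).
Hypotheses (HA' : is_alg A') (HB : is_alg B) (HB' : is_alg B').
Hypotheses (uU1 : is_universal U1) (uU2 : is_universal U2).

Let HM1 : is_proalg M1 := proj1 uU1.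
Let HM2 : is_proalg M2 := proj1 uU2.
Let HU2 : is_promor U2 := proj1 (proj2 uU2).
Let HM2j j : is_alg (@pobj _ M2 j) := proj1 (proj2 (proj2 (proj2 (proj2 HM2)))) j.

Lemma Mfg_ex (f : A -> A') (g : B -> B') : is_hom f -> is_hom g ->
  exists Psi, is_promor Psi /\ pm_eq (Phi U2 f g) (pm_comp (idtens B' Psi) U1).
Proof.
move=> hf hg.
have [psi [ppsi epsi _]] := proj2 (proj2 uU1) M2 HM2 (Phi U2 f g) (Phi_promor HB HB' HM2 HU2 hf hg).
by exists psi; split => //; apply: pm_eq_sym.
Qed.

Definition Kpm (Hf : A -> tens A' (polyA F)) (Hg : B -> tens B' (polyA F)) :
  promor (constP A) (tensP B' (Defs.polyP M2)) :=
  @PM F (constP A) (tensP B' (Defs.polyP M2)) (fun _ => tt) (fun j x => Kmap U2 Hf Hg j x).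

Lemma evH_promor (Hh : promor M1 (Defs.polyP M2)) (a : F) :
  is_promor Hh -> is_promor (pm_comp (evP M2 a) Hh).
Proof.
move=> [hH cH]; split.
  move=> j; have := comp_hom (ev_hom (HM2j j) a) (hH j); exact.
move=> j j' h; have [k [hk [hk' e]]] := cH j j' h.
have Hptr : is_hom (@ptr _ M2 _ _ h) := proj1 (proj2 (proj2 (proj2 (proj2 (proj2 HM2))))) j j' h.
exists k, hk, hk' => x /=.
by rewrite (ev_nat _ _ (HM2j j') (HM2j j) Hptr); congr ev; exact: e.
Qed.

Lemma ev_factor (Hh : promor M1 (Defs.polyP M2)) Hf Hg (a : F) fa ga :
  is_hom Hf -> is_hom Hg -> lmap ga -> WHa a Hf fa -> WHa a Hg ga -> is_promor Hh ->
  pm_eq (pm_comp (idtens B' Hh) U1) (Kpm Hf Hg) ->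
  pm_eq (pm_comp (idtens B' (pm_comp (evP M2 a) Hh)) U1) (Phi U2 fa ga).
Proof.
move=> hHf hHg lga Wf Wg [hH _] fac j.
have [k [hk [hk' e]]] := fac j.
exists tt, I, I => x /=.
have ex := e x; rewrite /= in ex.
transitivity (tmap id (ev a) (tmap id (@pm_map _ _ _ Hh j) (@pm_map _ _ _ U1 (pm_idx Hh j) x))).
  rewrite tmap_comp; first by apply: tmap_ext.
  - exact: id_lmap.
  - exact: hom_lmap (ev_hom (HM2j j) a).
rewrite ex; exact: (K_ev HM2 HU2 lga Wf Wg).
Qed.

Lemma step (f f' : A -> A') (g g' : B -> B') (Phi0 Phi1 : promor M1 M2) :
  WH f f' -> WH g g' ->
  is_promor Phi0 -> pm_eq (Phi U2 f g) (pm_comp (idtens B' Phi0) U1) ->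
  is_promor Phi1 -> pm_eq (Phi U2 f' g') (pm_comp (idtens B' Phi1) U1) ->
  elem_htpyP Phi0 Phi1.
Proof.
move=> [hf [hf' [Hf [hHf [Wf0 Wf1]]]]] [hg [hg' [Hg [hHg [Wg0 Wg1]]]]] p0 e0 p1 e1.
have pK : is_promor (Kpm Hf Hg).
  split; first by move=> j; exact: (K_hom HB' HM2 HU2 hHf hHg j).
  move=> j j' h; exists tt, I, I => x; exact: (K_compat HM2 HU2 Hf hHg h x).
have [Hh [pHh fac _]] := proj2 (proj2 uU1) _ (polyP_proalg HM2) (Kpm Hf Hg) pK.
split => //; split => //; exists Hh; split => //.
have gen : forall a fa ga (Phia : promor M1 M2), is_hom fa -> is_hom ga ->
    WHa a Hf fa -> WHa a Hg ga -> is_promor Phia ->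
    pm_eq (Phi U2 fa ga) (pm_comp (idtens B' Phia) U1) -> pm_eq (pm_comp (evP M2 a) Hh) Phia.
  move=> a fa ga Phia hfa hga Wf Wg pPa ea.
  have [psi [_ _ uniq]] :=
    proj2 (proj2 uU1) M2 HM2 (Phi U2 fa ga) (Phi_promor HB HB' HM2 HU2 hfa hga).
  apply: (pm_eq_trans HM1 (uniq _ (evH_promor a pHh)
            (ev_factor hHf hHg (hom_lmap hga) Wf Wg pHh fac))).
  by apply: pm_eq_sym; apply: uniq => //; exact: pm_eq_sym.
split; [exact: gen Wf0 Wg0 p0 e0 | exact: gen Wf1 Wg1 p1 e1].
Qed.

Lemma chain_f (g : B -> B') (hg : is_hom g) (f0 f1 : A -> A') :
  clos_refl_trans_1n _ (@elem_htpy F A A') f0 f1 -> is_hom f0 ->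
  forall Phi0 Phi1 : promor M1 M2,
  is_promor Phi0 -> pm_eq (Phi U2 f0 g) (pm_comp (idtens B' Phi0) U1) ->
  is_promor Phi1 -> pm_eq (Phi U2 f1 g) (pm_comp (idtens B' Phi1) U1) ->
  strongly_homotopic Phi0 Phi1.
Proof.
elim => [f|f h f1' eh rest IH] hf0 P0 P1 p0 e0 p1 e1.
  by apply: rt_step; exact: (step (WH_refl HA' hf0) (WH_refl HB' hg) p0 e0 p1 e1).
have hh : is_hom h by case: eh => _ [].
have [Psi [pPsi ePsi]] := Mfg_ex hh hg.
apply: rt_trans (IH hh Psi P1 pPsi ePsi p1 e1).
by apply: rt_step; exact: (step (WH_elem HA' eh) (WH_refl HB' hg) p0 e0 pPsi ePsi).
Qed.

Lemma chain_g (f : A -> A') (hf : is_hom f) (g0 g1 : B -> B') :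
  clos_refl_trans_1n _ (@elem_htpy F B B') g0 g1 -> is_hom g0 ->
  forall Phi0 Phi1 : promor M1 M2,
  is_promor Phi0 -> pm_eq (Phi U2 f g0) (pm_comp (idtens B' Phi0) U1) ->
  is_promor Phi1 -> pm_eq (Phi U2 f g1) (pm_comp (idtens B' Phi1) U1) ->
  strongly_homotopic Phi0 Phi1.
Proof.
elim => [g|g h g1' eh rest IH] hg0 P0 P1 p0 e0 p1 e1.
  by apply: rt_step; exact: (step (WH_refl HA' hf) (WH_refl HB' hg0) p0 e0 p1 e1).
have hh : is_hom h by case: eh => _ [].
have [Psi [pPsi ePsi]] := Mfg_ex hf hh.
apply: rt_trans (IH hh Psi P1 pPsi ePsi p1 e1).
by apply: rt_step; exact: (step (WH_refl HA' hf) (WH_elem HB' eh) p0 e0 pPsi ePsi).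
Qed.

End Step.

Theorem mainTheorem7 (F : fieldType) (A A' B B' : alg F)
  (f0 f1 : A -> A') (g0 g1 : B -> B')
  (MAB' MA'B : proalg F)
  (UAB' : promor (constP A) (tensP B' MAB'))
  (UA'B : promor (constP A') (tensP B MA'B))
  (Phi0 Phi1 : promor MAB' MA'B) :
  is_alg A -> is_alg A' -> is_alg B -> is_alg B' ->
  is_hom f0 -> is_hom f1 -> is_hom g0 -> is_hom g1 ->
  homotopic f0 f1 -> homotopic g0 g1 ->
  is_universal UAB' -> is_universal UA'B ->
  is_promor Phi0 ->
  pm_eq (pm_comp (gtens g0 MA'B) (pm_comp UA'B (const_mor f0)))
        (pm_comp (idtens B' Phi0) UAB') ->
  is_promor Phi1 ->
  pm_eq (pm_comp (gtens g1 MA'B) (pm_comp UA'B (const_mor f1)))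
        (pm_comp (idtens B' Phi1) UAB') ->
  strongly_homotopic Phi0 Phi1.
Proof.
move=> _ HA' HB HB' hf0 hf1 hg0 hg1 hf hg uU1 uU2 p0 e0 p1 e1.
have [Psi [pPsi ePsi]] := Mfg_ex HB HB' uU1 uU2 hf1 hg0.
apply: rt_trans.
  exact: (chain_f HA' HB HB' uU1 uU2 hg0 (clos_rt_rt1n _ _ _ _ hf) hf0 p0 e0 pPsi ePsi).
exact: (chain_g HA' HB HB' uU1 uU2 hf1 (clos_rt_rt1n _ _ _ _ hg) hg0 pPsi ePsi p1 e1).
Qed.
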